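(* Let $\Sigma$ be a simplicial complex which is oriented with respect to a partial order $\le$ on its vertex set $\Sigma^0$, let $Y$ be a topological space, and let $\Phi,\Psi:\Sigma^0\rightrightarrows Y$ be mappings (to nonempty subsets of $Y$) such that for every $v\in\Sigma^0$, $\Phi(v)\subset\Psi(v)$ and $\Phi(v)$ is contractible in $\Psi(v)$, and such that $\Psi(v)\subset\Phi(u)$ whenever $u,v\in\Sigma^0$ with $u<v$. Then there exists a continuous map $h:|\Sigma|\to Y$ such that $h(|\sigma|)\subset\Psi(\min\sigma)$ for every $\sigma\in\Sigma$.
   Context: A simplicial complex is a collection $\Sigma$ of nonempty finite subsets of a set such that $\tau\in\Sigma$ whenever $\emptyset\ne\tau\subset\sigma\in\Sigma$; its vertex set $\Sigma^0$ is $\bigcup\Sigma$. Its geometric realisation $|\Sigma|$ is obtained by embedding $\Sigma^0$ as a linearly independent subset of a linear space, letting $|\sigma|$ be the convex hull of $\sigma$ and $|\Sigma|=\bigcup_{\sigma\in\Sigma}|\sigma|$, with the Whitehead topology: $U\subset|\Sigma|$ is open iff $U\cap|\sigma|$ is open in $|\sigma|$ for every $\sigma\in\Sigma$. $\Sigma$ is oriented with respect to a partial order $\le$ on $\Sigma^0$ if each simplex is linearly ordered by $\le$; then $\min\sigma$ denotes the least vertex of $\sigma$. A subset $S\subset T$ is contractible in $T$ if there is a homotopy $H:S\times[0,1]\to T$ with $H(y,0)=y$ and $H(y,1)=p$ for all $y\in S$, for some point $p\in T$. *)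

(* Defs.v *)
From Stdlib Require Import Reals List.
Open Scope R_scope.

Record Topology (X : Type) := {
  open : (X -> Prop) -> Prop;
  open_ext : forall U U', (forall x, U x <-> U' x) -> open U -> open U';
  open_full : open (fun _ => True);
  open_inter : forall U W, open U -> open W -> open (fun x => U x /\ W x);
  open_union : forall F : (X -> Prop) -> Prop,
      (forall U, F U -> open U) -> open (fun x => exists U, F U /\ U x)
}.
Arguments open {X} t U.

Definition finite_set {V : Type} (s : V -> Prop) : Prop :=
  exists l : list V, NoDup l /\ forall v, s v <-> In v l.

Definition simplicial_complex {V : Type} (Sig : (V -> Prop) -> Prop) : Prop :=
  (forall s, Sig s -> finite_set s /\ exists v, s v) /\
  (forall s t, Sig s -> (exists v, t v) -> (forall v, t v -> s v) -> Sig t).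

Definition vertex {V : Type} (Sig : (V -> Prop) -> Prop) (v : V) : Prop :=
  exists s, Sig s /\ s v.

Definition oriented {V : Type} (Sig : (V -> Prop) -> Prop) (le : V -> V -> Prop) : Prop :=
  (forall v, vertex Sig v -> le v v) /\
  (forall u v, vertex Sig u -> vertex Sig v -> le u v -> le v u -> u = v) /\
  (forall u v w, vertex Sig u -> vertex Sig v -> vertex Sig w ->
                 le u v -> le v w -> le u w) /\
  (forall s, Sig s -> forall u v, s u -> s v -> le u v \/ le v u).

Definition is_min {V : Type} (le : V -> V -> Prop) (s : V -> Prop) (m : V) : Prop :=
  s m /\ forall v, s v -> le m v.

(** Geometric realisation: V is embedded as the standard basis of the space of
    finitely supported functions V -> R; |s| is the convex hull of s, i.e. the
    barycentric coordinate functions supported in s, nonnegative, summing to 1. *)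
Definition in_simplex {V : Type} (s : V -> Prop) (a : V -> R) : Prop :=
  (forall v, 0 <= a v) /\ (forall v, ~ s v -> a v = 0) /\
  exists l : list V, NoDup l /\ (forall v, s v <-> In v l) /\
                     fold_right Rplus 0 (map a l) = 1.

Definition is_point {V : Type} (Sig : (V -> Prop) -> Prop) (a : V -> R) : Prop :=
  exists s, Sig s /\ in_simplex s a.

Definition realisation {V : Type} (Sig : (V -> Prop) -> Prop) : Type :=
  { a : V -> R | is_point Sig a }.

(** Whitehead topology: P is open iff P ∩ |s| is open in |s| (Euclidean
    topology of the finite-dimensional simplex, via the sup norm on the
    coordinates in s) for every simplex s. *)
Definition whitehead_open {V : Type} (Sig : (V -> Prop) -> Prop)
  (P : realisation Sig -> Prop) : Prop :=
  forall s, Sig s -> forall a : realisation Sig, in_simplex s (proj1_sig a) -> P a ->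
    exists eps, 0 < eps /\
      forall b : realisation Sig, in_simplex s (proj1_sig b) ->
        (forall v, s v -> Rabs (proj1_sig b v - proj1_sig a v) < eps) -> P b.

Definition continuous_real {V Y : Type} (Sig : (V -> Prop) -> Prop) (TY : Topology Y)
  (h : realisation Sig -> Y) : Prop :=
  forall U, open TY U -> whitehead_open Sig (fun a => U (h a)).

(** S is contractible in T (both subsets of Y): a homotopy H : S x [0,1] -> T,
    continuous for the product of the subspace topology on S and the usual
    topology on [0,1] (T carrying the subspace topology of Y), with
    H(y,0) = y and H(y,1) = p for a fixed p in T. *)
Definition contractible_in {Y : Type} (TY : Topology Y) (S T : Y -> Prop) : Prop :=
  exists (H : Y -> R -> Y) (p : Y),
    T p /\
    (forall y t, S y -> 0 <= t <= 1 -> T (H y t)) /\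
    (forall y, S y -> H y 0 = y) /\
    (forall y, S y -> H y 1 = p) /\
    (forall U, open TY U ->
       forall y t, S y -> 0 <= t <= 1 -> U (H y t) ->
         exists W eps, open TY W /\ W y /\ 0 < eps /\
           forall y' t', S y' -> W y' -> 0 <= t' <= 1 -> Rabs (t' - t) < eps ->
             U (H y' t')).

(* Main.v *)
Require Import Defs.
From Stdlib Require Import Reals List Lra Lia Classical ClassicalEpsilon FunctionalExtensionality Permutation.
Open Scope R_scope.

Definition eid := excluded_middle_informative.
Definition sumL {V} (l : list V) (f : V -> R) := fold_right Rplus 0 (map f l).

Lemma sumL_perm {V} (l l' : list V) f : Permutation l l' -> sumL l f = sumL l' f.
Proof. unfold sumL; induction 1; simpl; lra. Qed.

Lemma sumL_ext {V} (l : list V) f g : (forall w, In w l -> f w = g w) -> sumL l f = sumL l g.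
Proof. unfold sumL; induction l; simpl; intros; auto. rewrite H by auto; rewrite IHl; auto. Qed.

Lemma sumL_scale {V} (l : list V) f k : sumL l (fun w => f w * k) = sumL l f * k.
Proof. unfold sumL; induction l; simpl; intros; [lra|]. unfold sumL in IHl; rewrite IHl; lra. Qed.

Lemma sumL_zero_pos {V} (l : list V) f : (forall w, 0 <= f w) ->
  (forall w, In w l -> f w <= 0) -> sumL l f = 0.
Proof. unfold sumL; induction l; simpl; intros; auto. rewrite IHl; auto. specialize (H a); specialize (H0 a (or_introl eq_refl)); lra. Qed.

Lemma sumL_pos_ex {V} (l : list V) f : (forall w, 0 <= f w) -> sumL l f = 1 ->
  exists w, In w l /\ 0 < f w.
Proof. intros. apply NNPP; intro C. rewrite sumL_zero_pos in H0; auto; try lra.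
  intros w Hw. destruct (Rle_dec (f w) 0); auto. exfalso; apply C; exists w; split; auto; lra. Qed.

Lemma sumL_le {V} (l : list V) f w : NoDup l -> (forall w, 0 <= f w) -> In w l -> f w <= sumL l f.
Proof. unfold sumL; induction l; simpl; intros; [contradiction|]. inversion H; subst.
  assert (0 <= fold_right Rplus 0 (map f l)).
  { clear -H0. induction l as [|x l IH]; simpl; try lra. specialize (H0 x); lra. }
  destruct H1; [subst; lra|]. specialize (IHl H5 H0 H1). specialize (H0 a); lra. Qed.

Lemma sumL_rest {V} (l : list V) f v : NoDup l -> In v l ->
  sumL l (fun w => if eid (w = v) then 0 else f w) = sumL l f - f v.
Proof. unfold sumL; induction l; simpl; intros; [contradiction|]. inversion H; subst.
  destruct (eid (a = v)).
  - subst. assert (E: sumL l (fun w => if eid (w = v) then 0 else f w) = sumL l f).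
    { apply sumL_ext. intros w Hw. destruct (eid (w = v)); auto; subst; contradiction. }
    unfold sumL in E; rewrite E; lra.
  - destruct H0; [congruence|]. rewrite IHl; auto; lra. Qed.

Lemma sumL_filter {V} (l : list V) p f : (forall w, p w = false -> f w = 0) ->
  sumL (filter p l) f = sumL l f.
Proof. unfold sumL; induction l; simpl; intros; auto. destruct (p a) eqn:E; simpl; rewrite IHl; auto.
  rewrite H; auto; lra. Qed.

Lemma filter_len {V} (l : list V) (p : V -> bool) : (length (filter p l) <= length l)%nat.
Proof. induction l; simpl; auto. destruct (p a); simpl; lia. Qed.

Lemma filter_len_lt {V} (l : list V) v : In v l ->
  (length (filter (fun w => if eid (w = v) then false else true) l) < length l)%nat.
Proof. induction l; simpl; intros; [contradiction|]. destruct (eid (a = v)).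
  - pose proof (filter_len l (fun w => if eid (w = v) then false else true)); lia.
  - destruct H; [congruence|]. simpl. specialize (IHl H); lia. Qed.

Definition cnt {V} (l : list V) (a : V -> R) : nat :=
  length (filter (fun w => if Rlt_dec 0 (a w) then true else false) l).

Lemma cnt_le {V} (l : list V) a : (cnt l a <= length l)%nat.
Proof. apply filter_len. Qed.

Lemma cnt_ext {V} (l : list V) f g : (forall w, In w l -> (0 < f w <-> 0 < g w)) -> cnt l f = cnt l g.
Proof. unfold cnt; induction l; simpl; intros; auto.
  destruct (Rlt_dec 0 (f a)), (Rlt_dec 0 (g a)); simpl; try rewrite IHl; auto;
  exfalso; apply n; apply H; auto. Qed.

Lemma cnt_pos {V} (l : list V) a : (forall w, 0 <= a w) -> sumL l a = 1 -> (1 <= cnt l a)%nat.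
Proof. intros. destruct (sumL_pos_ex l a H H0) as [w [Hw Hp]]. unfold cnt.
  clear H0. induction l; simpl in *; [contradiction|]. destruct Hw; subst.
  - destruct (Rlt_dec 0 (a w)); [simpl; lia|contradiction].
  - destruct (Rlt_dec 0 (a a0)); simpl; auto. Qed.

Definition CP {Y} (TY : Topology Y) (S T : Y -> Prop) (H : Y -> R -> Y) (p : Y) : Prop :=
    T p /\
    (forall y t, S y -> 0 <= t <= 1 -> T (H y t)) /\
    (forall y, S y -> H y 0 = y) /\
    (forall y, S y -> H y 1 = p) /\
    (forall U, open TY U ->
       forall y t, S y -> 0 <= t <= 1 -> U (H y t) ->
         exists W eps, open TY W /\ W y /\ 0 < eps /\
           forall y' t', S y' -> W y' -> 0 <= t' <= 1 -> Rabs (t' - t) < eps ->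
             U (H y' t')).

Section Main.
Variable V : Type.
Variable Sig : (V -> Prop) -> Prop.
Variable le : V -> V -> Prop.
Variable Y : Type.
Variable TY : Topology Y.
Variables Phi Psi : V -> Y -> Prop.
Hypothesis HSC : simplicial_complex Sig.
Hypothesis HOR : oriented Sig le.
Hypothesis HPP : forall v, vertex Sig v -> forall y, Phi v y -> Psi v y.
Hypothesis HC : forall v, vertex Sig v -> contractible_in TY (Phi v) (Psi v).
Hypothesis Hlt : forall u v, vertex Sig u -> vertex Sig v -> le u v -> u <> v ->
     forall y, Psi v y -> Phi u y.
Variable y0 : Y.

Definition Hp (v : V) : (Y -> R -> Y) * Y :=
  match eid (exists Hp : (Y -> R -> Y) * Y, CP TY (Phi v) (Psi v) (fst Hp) (snd Hp)) with
  | left e => proj1_sig (constructive_indefinite_description _ e)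
  | right _ => (fun y _ => y, y0)
  end.
Definition Hf v := fst (Hp v).
Definition pf v := snd (Hp v).

Lemma Hp_spec v : vertex Sig v -> CP TY (Phi v) (Psi v) (Hf v) (pf v).
Proof. intro Hv. unfold Hf, pf, Hp. destruct (eid _) as [e|n].
  - destruct (constructive_indefinite_description _ e); simpl; auto.
  - exfalso. apply n. destruct (HC v Hv) as [H [p X]]. exists (H, p). exact X. Qed.

Definition rest (a : V -> R) (v : V) : V -> R :=
  fun w => if eid (w = v) then 0 else a w / (1 - a v).

Definition mn (a : V -> R) (v : V) := 0 < a v /\ forall w, 0 < a w -> le v w.

Fixpoint hN (n : nat) (a : V -> R) : Y :=
  match n with
  | O => y0
  | S n' =>
    match eid (exists v, mn a v) with
    | left e => let v := proj1_sig (constructive_indefinite_description _ e) in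
        if Rle_dec (1/2) (a v) then pf v else Hf v (hN n' (rest a v)) (2 * a v)
    | right _ => y0
    end
  end.

Lemma hN_S n a v : mn a v -> (forall v', mn a v' -> v' = v) ->
  hN (S n) a = if Rle_dec (1/2) (a v) then pf v else Hf v (hN n (rest a v)) (2 * a v).
Proof. intros Hm Hu. simpl. destruct (eid _) as [e|n'].
  - destruct (constructive_indefinite_description _ e) as [v' Hv']; simpl.
    rewrite (Hu v' Hv'). reflexivity.
  - exfalso; apply n'; eauto. Qed.

Lemma vert s w : Sig s -> s w -> vertex Sig w.
Proof. intros; exists s; auto. Qed.

Lemma list_min (P : V -> Prop) l : (forall x, In x l -> vertex Sig x) ->
  (forall x y, In x l -> In y l -> le x y \/ le y x) ->
  (exists x, In x l /\ P x) ->
  exists m, In m l /\ P m /\ forall x, In x l -> P x -> le m x.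
Proof.
  destruct HOR as [Hr [Ha [Ht _]]].
  induction l as [|h t IH]; intros Hv Hc [x [Hx Px]]; [contradiction|].
  destruct (classic (exists x, In x t /\ P x)) as [E|NE].
  - destruct (IH (fun x H => Hv x (or_intror H)) (fun x y H1 H2 => Hc x y (or_intror H1) (or_intror H2)) E)
      as [m [Hm [Pm Hmin]]].
    destruct (classic (P h)) as [Ph|nPh].
    + destruct (Hc h m (or_introl eq_refl) (or_intror Hm)) as [L|L].
      * exists h; split; [left; auto|split; auto]. intros z [Hz|Hz] Pz; [subst; apply Hr; apply Hv; left; auto|].
        apply Ht with m; auto; try apply Hv; simpl; auto.
      * exists m; split; [right; auto|split; auto]. intros z [Hz|Hz] Pz; [subst; auto|auto].
    + exists m; split; [right; auto|split; auto]. intros z [Hz|Hz] Pz; [subst; contradiction|auto].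
  - assert (P h). { destruct Hx; [subst; auto|]. exfalso; apply NE; eauto. }
    exists h; split; [left; auto|split; auto]. intros z [Hz|Hz] Pz; [subst; apply Hr; apply Hv; left; auto|].
    exfalso; apply NE; eauto. Qed.

Lemma supp_in (s : V -> Prop) a w : in_simplex s a -> 0 < a w -> s w.
Proof. intros [_ [Hz _]] H. apply NNPP; intro C. rewrite Hz in H; auto; lra. Qed.

Lemma in_simplex_sum (s : V -> Prop) a l : in_simplex s a -> NoDup l -> (forall v, s v <-> In v l) -> sumL l a = 1.
Proof. intros [_ [_ [l' [Hn [Hl Hs]]]]] Hnd Hsl. rewrite (sumL_perm l l'); auto.
  apply NoDup_Permutation; auto. intro x; rewrite <- Hsl, Hl; tauto. Qed.

Lemma mn_exists s a : Sig s -> in_simplex s a -> exists v, mn a v.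
Proof. intros HS Ha. destruct Ha as [Hnn [Hz [l [Hnd [Hl Hs]]]]].
  destruct (list_min (fun w => 0 < a w) l) as [m [Hm [Pm Hmin]]].
  - intros x Hx; apply vert with s; auto; apply Hl; auto.
  - intros x y Hx Hy. destruct HOR as [_ [_ [_ Ho]]]. apply Ho with s; auto; apply Hl; auto.
  - apply sumL_pos_ex; auto.
  - exists m; split; auto. intros w Hw. apply Hmin; auto. apply Hl. apply supp_in with a; auto.
    split; auto; split; auto; exists l; auto. Qed.

Lemma mn_unique s a v v' : Sig s -> in_simplex s a -> mn a v -> mn a v' -> v' = v.
Proof. intros HS Ha [H1 H2] [H3 H4]. destruct HOR as [_ [Han _]]. apply Han.
  - apply vert with s; auto; apply supp_in with a; auto.
  - apply vert with s; auto; apply supp_in with a; auto.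
  - apply H4; auto.
  - apply H2; auto. Qed.

Lemma smin s : Sig s -> exists v0, s v0 /\ forall w, s w -> le v0 w.
Proof. intros HS. destruct HSC as [Hf _]. destruct (Hf s HS) as [[l [Hnd Hl]] [v Hv]].
  destruct (list_min (fun _ => True) l) as [m [Hm [_ Hmin]]].
  - intros x Hx; apply vert with s; auto; apply Hl; auto.
  - intros x y Hx Hy. destruct HOR as [_ [_ [_ Ho]]]. apply Ho with s; auto; apply Hl; auto.
  - exists v; split; auto; apply Hl; auto.
  - exists m; split; [apply Hl; auto|]. intros w Hw; apply Hmin; auto; apply Hl; auto. Qed.

Lemma Psi_mono u v y : vertex Sig u -> vertex Sig v -> le u v -> Psi v y -> Psi u y.
Proof. intros. destruct (classic (u = v)); [subst; auto|]. apply HPP; auto. apply Hlt with v; auto. Qed.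

Lemma rest_in (s : V -> Prop) a v : in_simplex s a -> s v -> a v < 1 -> in_simplex s (rest a v).
Proof. intros [Hnn [Hz [l [Hnd [Hl Hs]]]]] Hv Hlt1. unfold rest. split; [|split].
  - intro w. destruct (eid (w = v)); [lra|]. apply Rmult_le_pos; auto. apply Rlt_le, Rinv_0_lt_compat; lra.
  - intros w Hw. destruct (eid (w = v)); auto. rewrite Hz; auto. unfold Rdiv; ring.
  - exists l; split; auto; split; auto. fold (sumL l (fun w => if eid (w = v) then 0 else a w / (1 - a v))).
    rewrite (sumL_ext l _ (fun w => (if eid (w = v) then 0 else a w) * / (1 - a v))).
    + rewrite sumL_scale, sumL_rest; auto; [|apply Hl; auto]. change (sumL l a = 1) in Hs; rewrite Hs. field; lra.
    + intros w _. destruct (eid (w = v)); unfold Rdiv; ring. Qed.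

Lemma rest_pos a (v : V) w : a v < 1 -> 0 < rest a v w -> w <> v /\ 0 < a w.
Proof. unfold rest; intros H1 H2. destruct (eid (w = v)); [lra|]. split; auto.
  assert (a w = (a w / (1 - a v)) * (1 - a v)) by (field; lra). rewrite H. apply Rmult_lt_0_compat; lra. Qed.

Lemma cnt_rest (l : list V) a v : NoDup l -> In v l -> 0 < a v -> a v < 1 -> S (cnt l (rest a v)) = cnt l a.
Proof. induction l as [|x l IH]; simpl; intros Hnd Hin H0 H1; [contradiction|]. inversion Hnd; subst.
  unfold cnt; simpl. destruct (eid (x = v)).
  - subst. destruct (Rlt_dec 0 (rest a v v)) as [r|_].
    { unfold rest in r. destruct (eid (v = v)); [lra|congruence]. }
    destruct (Rlt_dec 0 (a v)); [|lra]. simpl. f_equal. apply cnt_ext. intros w Hw.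
    unfold rest. destruct (eid (w = v)); [subst; contradiction|]. split; intro.
    + assert (EE: a w = (a w / (1 - a v)) * (1 - a v)) by (field; lra). rewrite EE. apply Rmult_lt_0_compat; lra.
    + apply Rdiv_lt_0_compat; lra.
  - destruct Hin; [congruence|]. specialize (IH H4 H H0 H1). unfold cnt in IH.
    assert (E: (0 < rest a v x) <-> (0 < a x)).
    { unfold rest. destruct (eid (x = v)); [congruence|]. split; intro.
      + assert (EE: a x = (a x / (1 - a v)) * (1 - a v)) by (field; lra). rewrite EE. apply Rmult_lt_0_compat; lra.
      + apply Rdiv_lt_0_compat; lra. }
    destruct (Rlt_dec 0 (rest a v x)), (Rlt_dec 0 (a x)); simpl; try rewrite <- IH; auto; tauto. Qed.

Lemma in_list (s : V -> Prop) a : in_simplex s a -> exists l, NoDup l /\ (forall v, s v <-> In v l).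
Proof. intros [_ [_ [l [H1 [H2 _]]]]]; eauto. Qed.

Lemma hN_stab : forall n (s : V -> Prop) l a, Sig s -> NoDup l -> (forall v, s v <-> In v l) ->
  in_simplex s a -> (cnt l a <= n)%nat -> forall m, (n <= m)%nat -> hN m a = hN n a.
Proof.
  induction n; intros s l a HS Hnd Hl Ha Hc m Hm.
  - exfalso. pose proof (cnt_pos l a (proj1 Ha) (in_simplex_sum s a l Ha Hnd Hl)). lia.
  - destruct m; [lia|]. destruct (mn_exists s a HS Ha) as [v Hv].
    assert (Hu: forall v', mn a v' -> v' = v) by (intros; eapply mn_unique; eauto).
    rewrite !(hN_S _ a v Hv Hu). destruct (Rle_dec (1/2) (a v)); auto.
    assert (Hsv: s v) by (apply supp_in with a; auto; apply Hv).
    f_equal. apply IHn with s l; auto.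
    + apply rest_in; auto; lra.
    + pose proof (cnt_rest l a v Hnd (proj1 (Hl v) Hsv) (proj1 Hv) ltac:(lra)). lia.
    + lia.
Qed.

Definition hh (a : V -> R) : Y :=
  match eid (exists n, forall m, (n <= m)%nat -> hN m a = hN n a) with
  | left e => hN (proj1_sig (constructive_indefinite_description _ e)) a
  | right _ => y0
  end.

Lemma hh_eq (s : V -> Prop) l a : Sig s -> NoDup l -> (forall v, s v <-> In v l) ->
  in_simplex s a -> forall m, (length l <= m)%nat -> hh a = hN m a.
Proof. intros HS Hnd Hl Ha m Hm.
  assert (St: forall m, (length l <= m)%nat -> hN m a = hN (length l) a).
  { intros; eapply hN_stab; eauto. apply cnt_le. }
  unfold hh. destruct (eid _) as [e|n].
  - destruct (constructive_indefinite_description _ e) as [n0 Hn0]; simpl.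
    rewrite <- (Hn0 (max n0 m)) by lia. rewrite (St (max n0 m)), (St m) by lia. reflexivity.
  - exfalso; apply n. exists (length l); auto. Qed.

Lemma hN_Psi : forall n (s : V -> Prop) l a, Sig s -> NoDup l -> (forall v, s v <-> In v l) ->
  in_simplex s a -> (cnt l a <= n)%nat -> forall v, mn a v -> Psi v (hN n a).
Proof.
  induction n; intros s l a HS Hnd Hl Ha Hc v Hv.
  - exfalso. pose proof (cnt_pos l a (proj1 Ha) (in_simplex_sum s a l Ha Hnd Hl)). lia.
  - assert (Hu: forall v', mn a v' -> v' = v) by (intros; eapply mn_unique; eauto).
    assert (Hsv: s v) by (apply supp_in with a; auto; apply Hv).
    assert (Vv: vertex Sig v) by (apply vert with s; auto).
    destruct (Hp_spec v Vv) as [Hp1 [Hp2 _]].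
    rewrite (hN_S _ a v Hv Hu). destruct (Rle_dec (1/2) (a v)); auto.
    assert (Hr: in_simplex s (rest a v)) by (apply rest_in; auto; lra).
    destruct (mn_exists s _ HS Hr) as [v1 Hv1].
    assert (Hsv1: s v1) by (apply supp_in with (rest a v); auto; apply Hv1).
    destruct (rest_pos a v v1) as [Hne Hpos]; [lra|apply Hv1|].
    apply Hp2; [|destruct Hv; lra].
    apply Hlt with v1; auto. apply vert with s; auto. apply Hv; auto.
    apply IHn with s l; auto.
    pose proof (cnt_rest l a v Hnd (proj1 (Hl v) Hsv) (proj1 Hv) ltac:(lra)). lia.
Qed.

Lemma hh_Psi (s : V -> Prop) a v : Sig s -> in_simplex s a -> mn a v -> Psi v (hh a).
Proof. intros HS Ha Hv. destruct (in_list s a Ha) as [l [Hnd Hl]].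
  rewrite (hh_eq s l a HS Hnd Hl Ha (length l)) by lia.
  eapply hN_Psi; eauto. apply cnt_le. Qed.

Lemma Phi_min (s : V -> Prop) a v0 : Sig s -> in_simplex s a -> s v0 -> (forall w, s w -> le v0 w) ->
  a v0 = 0 -> Phi v0 (hh a).
Proof. intros HS Ha Hv0 Hmin Hz. destruct (mn_exists s a HS Ha) as [v1 Hv1].
  assert (Hsv1: s v1) by (apply supp_in with a; auto; apply Hv1).
  apply Hlt with v1; try (apply vert with s; auto); auto.
  - intro; subst. destruct Hv1; lra.
  - eapply hh_Psi; eauto. Qed.

Lemma Phi_rest (s : V -> Prop) a v0 : Sig s -> in_simplex s a -> s v0 -> (forall w, s w -> le v0 w) ->
  a v0 < 1 -> Phi v0 (hh (rest a v0)).
Proof. intros. apply Phi_min with s; auto. apply rest_in; auto.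
  unfold rest. destruct (eid (v0 = v0)); congruence. Qed.

Lemma hh_unfold (s : V -> Prop) a v0 : Sig s -> in_simplex s a -> s v0 -> (forall w, s w -> le v0 w) ->
  hh a = if Rle_dec (1/2) (a v0) then pf v0 else Hf v0 (hh (rest a v0)) (2 * a v0).
Proof. intros HS Ha Hv0 Hmin. destruct (in_list s a Ha) as [l [Hnd Hl]].
  assert (Vv: vertex Sig v0) by (apply vert with s; auto).
  destruct (Rlt_dec 0 (a v0)) as [Hp|Hz].
  - assert (Hv: mn a v0). { split; auto. intros w Hw; apply Hmin; apply supp_in with a; auto. }
    assert (Hu: forall v', mn a v' -> v' = v0) by (intros; eapply mn_unique; eauto).
    rewrite (hh_eq s l a HS Hnd Hl Ha (S (length l))) by lia.
    rewrite (hN_S _ a v0 Hv Hu). destruct (Rle_dec (1/2) (a v0)); auto.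
    f_equal. symmetry. apply hh_eq with s l; auto. apply rest_in; auto; lra.
  - assert (Hz0: a v0 = 0) by (pose proof (proj1 Ha v0); lra).
    destruct (Rle_dec (1/2) (a v0)); [lra|].
    assert (E: rest a v0 = a).
    { apply functional_extensionality; intro w. unfold rest. destruct (eid (w = v0)); [subst; auto|].
      rewrite Hz0; field. }
    rewrite E, Hz0. replace (2 * 0) with 0 by ring.
    destruct (Hp_spec v0 Vv) as [_ [_ [Hp3 _]]]. rewrite Hp3; auto.
    apply Phi_min with s; auto. Qed.

Lemma abs_le1 (s : V -> Prop) a w : in_simplex s a -> a w <= 1.
Proof. intros Ha. destruct (classic (s w)).
  - destruct Ha as [Hnn [Hz [l [Hnd [Hl Hs]]]]]. change (sumL l a = 1) in Hs. rewrite <- Hs.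
    apply sumL_le; auto. apply Hl; auto.
  - destruct Ha as [_ [Hz _]]. rewrite Hz; auto; lra. Qed.

Lemma rest_close x x' p q d : Rabs (x - x') < d -> Rabs (p - q) < d -> 0 <= x' <= 1 ->
  0 <= p < 1/2 -> 0 <= q <= 1/2 -> Rabs (x / (1 - p) - x' / (1 - q)) < 8 * d.
Proof. intros H1 H2 H3 H4 H5.
  assert (E: x / (1 - p) - x' / (1 - q) = ((x - x') * (1 - q) + x' * (p - q)) / ((1 - p) * (1 - q)))
    by (field; lra).
  rewrite E. unfold Rdiv. rewrite Rabs_mult. rewrite Rabs_inv.
  rewrite (Rabs_right ((1 - p) * (1 - q))) by nra.
  assert (N: Rabs ((x - x') * (1 - q) + x' * (p - q)) < 2 * d).
  { eapply Rle_lt_trans; [apply Rabs_triang|]. rewrite !Rabs_mult.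
    rewrite (Rabs_right (1 - q)) by lra. rewrite (Rabs_right x') by lra.
    assert (0 <= Rabs (x - x')) by apply Rabs_pos. assert (0 <= Rabs (p - q)) by apply Rabs_pos. nra. }
  assert (D: 1/4 <= (1 - p) * (1 - q)) by nra.
  assert (0 < / ((1 - p) * (1 - q)) <= 4).
  { split. apply Rinv_0_lt_compat; nra. replace 4 with (/ (1/4)) by field. apply Rinv_le_contravar; lra. }
  assert (0 <= Rabs ((x - x') * (1 - q) + x' * (p - q))) by apply Rabs_pos. nra. Qed.

Definition dropv (l : list V) v0 := filter (fun w => if eid (w = v0) then false else true) l.

Lemma face (s : V -> Prop) l a v0 : NoDup l -> (forall v, s v <-> In v l) ->
  in_simplex s a -> s v0 -> a v0 < 1 ->
  NoDup (dropv l v0) /\ (forall v, (s v /\ v <> v0) <-> In v (dropv l v0)) /\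
  in_simplex (fun w => s w /\ w <> v0) (rest a v0).
Proof. intros Hnd Hl Ha Hv0 H1.
  assert (Hsl: forall v, (s v /\ v <> v0) <-> In v (dropv l v0)).
  { intro v. unfold dropv. rewrite filter_In, <- Hl. destruct (eid (v = v0)); intuition congruence. }
  pose proof (rest_in s a v0 Ha Hv0 H1) as Hr.
  split; [apply NoDup_filter; auto|]. split; auto.
  split; [apply Hr|]. split.
  - intros w Hw. unfold rest. destruct (eid (w = v0)); auto. destruct Hr as [_ [Hz _]].
    specialize (Hz w). unfold rest in Hz. destruct (eid (w = v0)); [contradiction|].
    apply Hz. intro; apply Hw; auto.
  - exists (dropv l v0). split; [apply NoDup_filter; auto|]. split; auto.
    change (sumL (dropv l v0) (rest a v0) = 1). unfold dropv. rewrite sumL_filter.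
    + apply in_simplex_sum with s; auto.
    + intros w Hw. destruct (eid (w = v0)); [|discriminate]. subst. unfold rest.
      destruct (eid (v0 = v0)); congruence. Qed.

Lemma cont : forall n (s : V -> Prop) l, Sig s -> NoDup l -> (forall v, s v <-> In v l) ->
  (length l <= n)%nat -> forall a, in_simplex s a -> forall U, open TY U -> U (hh a) ->
  exists eps, 0 < eps /\ forall b, in_simplex s b -> (forall v, s v -> Rabs (b v - a v) < eps) -> U (hh b).
Proof.
  induction n; intros s l HS Hnd Hl Hlen a Ha U HU Ua.
  - exfalso. destruct l; [|simpl in Hlen; lia]. pose proof (in_simplex_sum s a nil Ha Hnd Hl).
    unfold sumL in H; simpl in H; lra.
  - destruct (smin s HS) as [v0 [Hv0 Hmin]].
    assert (Vv: vertex Sig v0) by (apply vert with s; auto).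
    destruct (Hp_spec v0 Vv) as [Hp1 [Hp2 [Hp3 [Hp4 Hp5]]]].
    destruct (Rlt_le_dec (1/2) (a v0)) as [A|B].
    + exists (a v0 - 1/2). split; [lra|]. intros b Hb Hc.
      specialize (Hc v0 Hv0). apply Rabs_def2 in Hc.
      rewrite (hh_unfold s b v0) by auto. rewrite (hh_unfold s a v0) in Ua by auto.
      destruct (Rle_dec (1/2) (a v0)); [|lra]. destruct (Rle_dec (1/2) (b v0)); [auto|lra].
    + set (ra := rest a v0).
      assert (Phra: Phi v0 (hh ra)) by (apply Phi_rest with s; auto; lra).
      assert (a0nn: 0 <= a v0) by apply (proj1 Ha).
      assert (Ut: U (Hf v0 (hh ra) (2 * a v0))).
      { rewrite (hh_unfold s a v0) in Ua by auto. destruct (Rle_dec (1/2) (a v0)); auto.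
        replace (2 * a v0) with 1 by lra. rewrite Hp4; auto. }
      destruct (Hp5 U HU (hh ra) (2 * a v0) Phra ltac:(lra) Ut) as [W [eps1 [HW [Wy [He1 HWU]]]]].
      destruct (face s l a v0 Hnd Hl Ha Hv0 ltac:(lra)) as [Hnd' [Hl' Hra]].
      assert (HS': Sig (fun w => s w /\ w <> v0)).
      { destruct HSC as [_ Hcl]. apply Hcl with s; auto; [|intros v [? ?]; auto].
        destruct (sumL_pos_ex (dropv l v0) ra (proj1 Hra)) as [w [Hw _]].
        - apply in_simplex_sum with (fun w => s w /\ w <> v0); auto.
        - exists w; apply Hl'; auto. }
      assert (Hlen': (length (dropv l v0) <= n)%nat).
      { pose proof (filter_len_lt l v0 (proj1 (Hl v0) Hv0)). unfold dropv. lia. }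
      destruct (IHn _ _ HS' Hnd' Hl' Hlen' ra Hra W HW Wy) as [eps2 [He2 HW2]].
      exists (Rmin (eps1/2) (eps2/8)). split; [apply Rmin_pos; lra|]. intros b Hb Hc.
      assert (d1: Rmin (eps1/2) (eps2/8) <= eps1/2) by apply Rmin_l.
      assert (d2: Rmin (eps1/2) (eps2/8) <= eps2/8) by apply Rmin_r.
      assert (Hc0 := Hc v0 Hv0). apply Rabs_def2 in Hc0.
      assert (b0nn: 0 <= b v0) by apply (proj1 Hb).
      rewrite (hh_unfold s b v0) by auto. destruct (Rle_dec (1/2) (b v0)).
      * rewrite <- (Hp4 (hh ra) Phra). apply HWU; auto; try lra.
        rewrite Rabs_right; lra.
      * apply HWU.
        -- apply Phi_rest with s; auto; lra.
        -- destruct (face s l b v0 Hnd Hl Hb Hv0 ltac:(lra)) as [_ [_ Hrb]].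
           apply HW2; auto. intros w [Hw Hne]. unfold ra, rest.
           destruct (eid (w = v0)); [contradiction|].
           apply Rlt_le_trans with (8 * Rmin (eps1/2) (eps2/8)); [|lra].
           apply rest_close; auto; try lra.
           ++ split; [apply (proj1 Ha)|apply abs_le1 with s; auto].
        -- lra.
        -- replace (2 * b v0 - 2 * a v0) with (2 * (b v0 - a v0)) by ring.
           rewrite Rabs_mult, Rabs_right by lra. specialize (Hc v0 Hv0). lra.
Qed.

End Main.

Theorem theorem3p1 (V : Type) (Sig : (V -> Prop) -> Prop) (le : V -> V -> Prop)
  (Y : Type) (TY : Topology Y) (Phi Psi : V -> Y -> Prop) :
  simplicial_complex Sig ->
  oriented Sig le ->
  (forall v, vertex Sig v -> exists y, Phi v y) ->
  (forall v, vertex Sig v -> exists y, Psi v y) ->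
  (forall v, vertex Sig v -> forall y, Phi v y -> Psi v y) ->
  (forall v, vertex Sig v -> contractible_in TY (Phi v) (Psi v)) ->
  (forall u v, vertex Sig u -> vertex Sig v -> le u v -> u <> v ->
     forall y, Psi v y -> Phi u y) ->
  exists h : realisation Sig -> Y,
    continuous_real Sig TY h /\
    forall s, Sig s -> forall m, is_min le s m ->
      forall a : realisation Sig, in_simplex s (proj1_sig a) -> Psi m (h a).
Proof.
  intros HSC HOR HPhi HPsi HPP HC Hlt.
  destruct (classic (exists y : Y, True)) as [[y0 _]|NoY].
  - exists (fun a => hh V le Y TY Phi Psi y0 (proj1_sig a)). split.
    + intros U HU s HS a Ha Ua.
      destruct (in_list V s _ Ha) as [l [Hnd Hl]].
      destruct (cont V Sig le Y TY Phi Psi HSC HOR HC Hlt y0 (length l) s l HS Hnd Hl (le_n _)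
                  _ Ha U HU Ua) as [eps [He Hb]].
      exists eps; split; auto.
    + intros s HS m [Hm Hmin] a Ha.
      destruct (mn_exists V Sig le HOR s _ HS Ha) as [v1 Hv1].
      assert (Hs1: s v1) by (apply supp_in with (proj1_sig a); auto; apply Hv1).
      apply (Psi_mono V Sig le Y Phi Psi HPP Hlt m v1); auto.
      * apply vert with s; auto.
      * apply vert with s; auto.
      * eapply (hh_Psi V Sig le Y TY Phi Psi HOR HC Hlt y0 s); eauto.
  - assert (F: realisation Sig -> False).
    { intros [a [s [HS _]]]. destruct HSC as [Hf _]. destruct (Hf s HS) as [_ [v Hv]].
      destruct (HPsi v (vert V Sig s v HS Hv)) as [y _]. apply NoY; eauto. }
    exists (fun a => False_rect Y (F a)). split.
    + intros U HU s HS a. exfalso; apply F; auto.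
    + intros s HS m _ a. exfalso; apply F; auto.
Qed.
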